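(* Setting: $\mathcal{I}$ and $\mathcal{J}$ are finite sets; for each $i\in\mathcal{I}$, $\mathcal{A}_i$ is a finite set with $|\mathcal{A}_i|\ge2$; for each $j\in\mathcal{J}$, $\mathcal{I}_j\subseteq\mathcal{I}$, and $\mathcal{J}_i=\{j\in\mathcal{J}: i\in\mathcal{I}_j\}$. Let $\mathcal{L}=\{j\in\mathcal{J}:|\mathcal{I}_j|\ge2\}$ and $\mathcal{Y}=\{i\in\mathcal{I}:\exists j\in\mathcal{J}_i \text{ with } |\mathcal{I}_j|=1\}$. For $i\in\mathcal{Y}$ let $h_i:\mathcal{A}_i\to(0,\infty)$, and for each $j\in\mathcal{L}$ let $\mathcal{B}_j\subseteq\prod_{i\in\mathcal{I}_j}\mathcal{A}_i$ (elements written $\mathbf{b}=(b_i)_{i\in\mathcal{I}_j}$). Let $\mathcal{B}=\{\mathbf{x}\in\prod_{i\in\mathcal{I}}\mathcal{A}_i:(x_i)_{i\in\mathcal{I}_j}\in\mathcal{B}_j\ \forall j\in\mathcal{L}\}$, and assume $\mathbf{P}_{\mathcal{Y}}:\mathbf{x}\mapsto(x_i)_{i\in\mathcal{Y}}$ is injective on $\mathcal{B}$. For each $i\in\mathcal{I}$ fix $\alpha_i\in\mathcal{A}_i$, let $\mathcal{A}_i^-=\mathcal{A}_i\setminus\{\alpha_i\}$, and for $i\in\mathcal{I}\setminus\mathcal{Y}$ fix $t_i\in\mathcal{J}_i$. Relaxed LP A (variables $\tilde g_i^{(\alpha)}$ for $i\in\mathcal{Y},\alpha\in\mathcal{A}_i^-$,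 and $p_{j,\mathbf{b}}$ for $j\in\mathcal{L},\mathbf{b}\in\mathcal{B}_j$): maximize $\sum_{i\in\mathcal{Y}}\sum_{\alpha\in\mathcal{A}_i^-}\log\frac{h_i(\alpha)}{h_i(\alpha_i)}\,\tilde g_i^{(\alpha)}$ over the polytope $\tilde{\mathcal{Q}}$ given by: $p_{j,\mathbf{b}}\ge0$ for all $j\in\mathcal{L},\mathbf{b}\in\mathcal{B}_j$; $\sum_{\mathbf{b}\in\mathcal{B}_j}p_{j,\mathbf{b}}=1$ for all $j\in\mathcal{L}$; $\tilde g_i^{(\alpha)}=\sum_{\mathbf{b}\in\mathcal{B}_j,b_i=\alpha}p_{j,\mathbf{b}}$ for all $i\in\mathcal{Y}$, $j\in\mathcal{J}_i\cap\mathcal{L}$, $\alpha\in\mathcal{A}_i^-$; and $\sum_{\mathbf{b}\in\mathcal{B}_j,b_i=\alpha}p_{j,\mathbf{b}}=\sum_{\mathbf{b}\in\mathcal{B}_{t_i},b_i=\alpha}p_{t_i,\mathbf{b}}$ for all $i\in\mathcal{I}\setminus\mathcal{Y}$, $j\in\mathcal{J}_i\setminus\{t_i\}$, $\alpha\in\mathcal{A}_i^-$. If the LP solution $(\tilde{\mathbf{g}}_{\mathrm{out}},\mathbf{p})$ is integral (all coordinates integers), the receiver outputs $\mathbf{x}_{\mathrm{out}}=\mathbf{P}_{\mathcal{Y}}^{-1}(\tilde{\boldsymbol{\Xi}}^{-1}(\tilde{\mathbf{g}}_{\mathrm{out}}))$, where $\tilde{\boldsymbol{\Xi}}(\mathbf{x}_{\mathcal{Y}})=(([\gamma=x_i])_{\gamma\in\mathcal{A}_i^-})_{i\in\mathcal{Y}}$;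 otherwise it reports a receiver failure. Relaxed LP B (variables $g_i^{(\alpha)}$ for $i\in\mathcal{I},\alpha\in\mathcal{A}_i$, and $p_{j,\mathbf{b}}$ as before): maximize $\sum_{i\in\mathcal{Y}}\sum_{\alpha\in\mathcal{A}_i}\log h_i(\alpha)\,g_i^{(\alpha)}$ over the polytope $\mathcal{Q}$ given by: $p_{j,\mathbf{b}}\ge0$; $\sum_{\mathbf{b}\in\mathcal{B}_j}p_{j,\mathbf{b}}=1$ for all $j\in\mathcal{L}$; and $g_i^{(\alpha)}=\sum_{\mathbf{b}\in\mathcal{B}_j,b_i=\alpha}p_{j,\mathbf{b}}$ for all $j\in\mathcal{L}$, $i\in\mathcal{I}_j$, $\alpha\in\mathcal{A}_i$. If the LP solution $(\bar{\mathbf{g}}_{\mathrm{out}},\mathbf{p})$ is integral, the receiver outputs $\mathbf{x}_{\mathrm{out}}=\bar{\boldsymbol{\Xi}}^{-1}(\bar{\mathbf{g}}_{\mathrm{out}})$, where $\bar{\boldsymbol{\Xi}}(\mathbf{x})=(([\gamma=x_i])_{\gamma\in\mathcal{A}_i})_{i\in\mathcal{I}}$; otherwise it reports a receiver failure. Claim: LP B produces the same output (configuration or receiver failure) as LP A. Moreover, if the receiver output is a configuration, then it is the optimum configuration, i.e. $\mathbf{x}_{\mathrm{out}}\in\mathcal{B}$ and $\mathbf{x}_{\mathrm{out}}=\mathbf{x}_{\mathrm{opt}}$, where $\mathbf{x}_{\mathrm{opt}}$ maximizes $\sum_{i\in\mathcal{Y}}\log h_i(x_i)$ over $\mathbf{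x}\in\mathcal{B}$.
   Context: $[P]$ denotes $1$ if the predicate $P$ holds and $0$ otherwise. The setting models maximization of a product of functions $u(\mathbf{x})=\prod_{i\in\mathcal{Y}}h_i(x_i)\prod_{j\in\mathcal{L}}[(x_i)_{i\in\mathcal{I}_j}\in\mathcal{B}_j]$ described by a factor graph, where pendant (degree-one) factor nodes are collected into the positive functions $h_i$ and every non-pendant factor node $j\in\mathcal{L}$ is the indicator function of a local behaviour $\mathcal{B}_j$; the optimum configuration $\mathbf{x}_{\mathrm{opt}}$ maximizes $u$. $\mathbf{P}_{\mathcal{Y}}^{-1}$ denotes the inverse of $\mathbf{P}_{\mathcal{Y}}$ restricted to $\mathcal{B}$. *)

(* Defs.v *)
From HB Require Import structures.
From mathcomp Require Import all_boot all_order all_algebra.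
From mathcomp Require Import all_classical all_reals all_analysis.
Set Implicit Arguments. Unset Strict Implicit. Unset Printing Implicit Defensive.
Import Order.TTheory GRing.Theory Num.Theory.
Local Open Scope ring_scope.

Section Setting.
Variable R : realType.
Variables (I J : finType) (A : I -> finType) (Ij : J -> {set I}).

Definition lconf (j : J) := {dffun forall k : {x : I | x \in Ij j}, A (val k)}.
Definition conf := forall i : I, A i.

(* b_i for i in I_j (None if i is not in I_j) *)
Definition lc_at (j : J) (b : lconf j) (i : I) : option (A i) :=
  (if i \in Ij j as c return ((i \in Ij j) = c -> option (A i))
   then fun H => Some (b (exist (fun x => x \in Ij j) i H))
   else fun _ => None) (erefl _).

Definition restr (j : J) (x : conf) : lconf j :=
  @finfun _ (fun k : {x : I | x \in Ij j} => A (val k)) (fun k => x (val k)).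

Definition Lset : {set J} := [set j | (1 < #|Ij j|)%N].
Definition Yset : {set I} := [set i | [exists j, (i \in Ij j) && (#|Ij j| == 1)%N]].
Definition Jset (i : I) : {set J} := [set j | i \in Ij j].

Variable Bj : forall j : J, {set lconf j}.

Definition inB (x : conf) : Prop := forall j, j \in Lset -> restr j x \in Bj j.

(* LP variables: coordinates outside the index sets of the paper are unused *)
Definition gvar := forall i : I, A i -> R.
Definition pvar := forall j : J, lconf j -> R.

(* h is only used for i in Y *)
Variables (h : gvar) (alpha : conf) (t : I -> J).
Arguments h : clear implicits.

Definition marg (p : pvar) (j : J) (i : I) (a : A i) : R :=
  \sum_(b in Bj j | lc_at b i == Some a) p j b.

Definition p_ok (p : pvar) : Prop :=
  (forall j, j \in Lset -> forall b, b \in Bj j -> 0 <= p j b) /\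
  (forall j, j \in Lset -> \sum_(b in Bj j) p j b = 1).

Definition QA (g : gvar) (p : pvar) : Prop :=
  p_ok p /\
  (forall i, i \in Yset -> forall j, j \in Jset i -> j \in Lset ->
     forall a : A i, a != alpha i -> g i a = marg p j a) /\
  (forall i, i \notin Yset -> forall j, j \in Jset i -> j != t i ->
     forall a : A i, a != alpha i -> marg p j a = marg p (t i) a).

Definition QB (g : gvar) (p : pvar) : Prop :=
  p_ok p /\
  (forall j, j \in Lset -> forall i, i \in Ij j ->
     forall a : A i, g i a = marg p j a).

Definition objA (g : gvar) : R :=
  \sum_(i in Yset) \sum_(a : A i | a != alpha i) ln (h i a / h i (alpha i)) * g i a.

Definition objB (g : gvar) : R :=
  \sum_(i in Yset) \sum_(a : A i) ln (h i a) * g i a.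

Definition optA (g : gvar) (p : pvar) : Prop :=
  QA g p /\ forall g' p', QA g' p' -> objA g' <= objA g.
Definition optB (g : gvar) (p : pvar) : Prop :=
  QB g p /\ forall g' p', QB g' p' -> objB g' <= objB g.

Definition p_int (p : pvar) : Prop :=
  forall j, j \in Lset -> forall b, b \in Bj j -> p j b \is a Num.int.

Definition intA (g : gvar) (p : pvar) : Prop :=
  (forall i, i \in Yset -> forall a : A i, a != alpha i -> g i a \is a Num.int) /\ p_int p.
Definition intB (g : gvar) (p : pvar) : Prop :=
  (forall i (a : A i), g i a \is a Num.int) /\ p_int p.

(* receiver outputs configuration x:
   LP A: x = P_Y^{-1}(Xi~^{-1}(g)), i.e. x in B and Xi~(P_Y x) = g;
   LP B: x = Xibar^{-1}(g), i.e. Xibar(x) = g. *)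
Definition outA (g : gvar) (p : pvar) (x : conf) : Prop :=
  intA g p /\ inB x /\
  (forall i, i \in Yset -> forall a : A i, a != alpha i -> g i a = (x i == a)%:R).
Definition outB (g : gvar) (p : pvar) (x : conf) : Prop :=
  intB g p /\ (forall i (a : A i), g i a = (x i == a)%:R).

Definition score (x : conf) : R := \sum_(i in Yset) ln (h i (x i)).

Definition is_opt_conf (x : conf) : Prop :=
  inB x /\ forall y, inB y -> score y <= score x.

End Setting.

(* Main.v *)
Require Import Defs.
From HB Require Import structures.
From mathcomp Require Import all_boot all_order all_algebra.
From mathcomp Require Import all_classical all_reals all_analysis.
From mathcomp Require Import ring lra.
Import Order.TTheory GRing.Theory Num.Theory.
Local Open Scope ring_scope.

Section Pf.
Variable R : realType.
Variables (I J : finType) (A : I -> finType) (Ij : J -> {set I}).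
Variable Bj : forall j : J, {set lconf A Ij j}.
Variables (h : gvar R A) (alpha : conf A) (t : I -> J).
Hypothesis hh : forall i, i \in Yset Ij -> forall a : A i, 0 < h i a.
Hypothesis hinj : forall x y : conf A, inB Bj x -> inB Bj y ->
            (forall i, i \in Yset Ij -> x i = y i) -> x = y.
Hypothesis ht : forall i, i \notin Yset Ij -> t i \in Jset Ij i.
Hypothesis hcov : forall i : I, exists j : J, (j \in Jset Ij i) && (j \in Lset Ij).

Lemma lc_atE j (b : lconf A Ij j) i (H : i \in Ij j) :
  lc_at b i = Some (b (exist _ i H)).
Proof.
rewrite /lc_at.
have key : forall c (e : (i \in Ij j) = c), (if c as c' return ((i \in Ij j) = c' -> option (A i)) then fun H0 => Some (b (exist (fun x => x \in Ij j) i H0)) else fun _ => None) e = Some (b (exist _ i H)).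
  by case=> e /=; [rewrite (bool_irrelevance e H) | rewrite H in e].
exact: key.
Qed.

Lemma lc_atN j (b : lconf A Ij j) i (H : i \notin Ij j) : lc_at b i = None.
Proof.
rewrite /lc_at.
have key : forall c (e : (i \in Ij j) = c), (if c as c' return ((i \in Ij j) = c' -> option (A i)) then fun H0 => Some (b (exist (fun x => x \in Ij j) i H0)) else fun _ => None) e = None.
  by case=> e //=; rewrite e in H.
exact: key.
Qed.

Lemma lc_at_restr j (x : conf A) i : i \in Ij j -> lc_at (restr Ij j x) i = Some (x i).
Proof. by move=> H; rewrite (lc_atE _ _ _ H) /restr ffunE. Qed.

Lemma sum_eq1 (T : finType) (P : pred T) (b0 : T) :
  \sum_(b | P b) ((b == b0)%:R : R) = (P b0)%:R.
Proof.
rewrite big_mkcond /= (bigD1 b0) //= eqxx big1 ?addr0; first by case: (P b0).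
by move=> b /negbTE ->; case: (P b).
Qed.

Lemma sum_ind_mul (T : finType) (F : T -> R) x : \sum_a F a * (x == a)%:R = F x.
Proof.
rewrite (bigD1 x) //= eqxx mulr1 big1 ?addr0 // => a.
by rewrite eq_sym => /negbTE ->; rewrite mulr0.
Qed.

Lemma marg_sum (p : pvar R A Ij) j i : i \in Ij j ->
  \sum_(a : A i) marg Bj p j a = \sum_(b in Bj j) p j b.
Proof.
move=> H; rewrite /marg.
rewrite (partition_big (fun b : lconf A Ij j => b (exist _ i H)) predT) //=.
apply: eq_bigr => a _; apply: eq_bigl => b.
by rewrite (lc_atE _ _ _ H).
Qed.

Lemma Y_of_notL i j : i \in Ij j -> j \notin Lset Ij -> i \in Yset Ij.
Proof.
rewrite !inE => Hi; rewrite -leqNgt => Hle.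
apply/existsP; exists j; rewrite Hi /=.
have : (0 < #|Ij j|)%N by apply/card_gt0P; exists i.
by rewrite eqn_leq Hle => ->.
Qed.

Lemma int_ge1 (x : R) : x \is a Num.int -> 0 < x -> 1 <= x.
Proof.
move=> xi xp; have : x \is a Num.nat by rewrite natrEint xi ltW.
case/natrP => n Hn; move: xp; by rewrite Hn ler1n ltr0n.
Qed.

Lemma p_single (p : pvar R A Ij) j : p_ok Bj p -> p_int Bj p -> j \in Lset Ij ->
  exists2 b0, b0 \in Bj j & forall b, b \in Bj j -> p j b = (b == b0)%:R.
Proof.
move=> [Hpos Hsum] Hint jL.
have S := Hsum j jL.
case: (pickP (fun b => (b \in Bj j) && (p j b != 0))) => [b0 /andP[Hb0 Hp0]|H0]; last first.
  rewrite big1 in S; first by move: S => /eqP; rewrite eq_sym oner_eq0.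
  by move=> b Hb; move: (H0 b); rewrite Hb /= => /negbFE/eqP.
exists b0 => //.
have ge1 : 1 <= p j b0.
  by apply: int_ge1; [exact: Hint | rewrite lt0r Hp0 Hpos].
rewrite (bigD1 b0) //= in S.
move: S; set s := (X in _ + X = _) => S.
have r0 : 0 <= s.
  by apply: sumr_ge0 => b /andP[Hb _]; exact: Hpos.
have E0 : s = 0 by lra.
move=> b Hb; case: (eqVneq b b0) => [->|Hn].
  by suff -> : p j b0 = 1 by []; lra.
have Hz : forall c, (c \in Bj j) && (c != b0) -> p j c = 0.
  by apply: psumr_eq0P E0 => c /andP[Hc _]; exact: Hpos.
by rewrite Hz // Hb Hn.
Qed.

Lemma marg_single (p : pvar R A Ij) j b0 i (a : A i) :
  (forall b, b \in Bj j -> p j b = (b == b0)%:R) -> b0 \in Bj j ->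
  marg Bj p j a = (lc_at b0 i == Some a)%:R.
Proof.
move=> Hp Hb0; rewrite /marg (eq_bigr (fun b => (b == b0)%:R)); last first.
  by move=> b /andP[Hb _]; exact: Hp.
by rewrite sum_eq1 /= Hb0.
Qed.

Definition cj i : J := xchoose (hcov i).
Lemma cjL i : cj i \in Lset Ij.
Proof. by case/andP: (xchooseP (hcov i)). Qed.
Lemma cjI i : i \in Ij (cj i).
Proof. by case/andP: (xchooseP (hcov i)); rewrite inE. Qed.
Definition gOf (p : pvar R A Ij) : gvar R A := fun i a => marg Bj p (cj i) a.

Lemma marg_all (p : pvar R A Ij) j j' i : p_ok Bj p -> j \in Lset Ij -> j' \in Lset Ij ->
  i \in Ij j -> i \in Ij j' ->
  (forall a : A i, a != alpha i -> marg Bj p j a = marg Bj p j' a) ->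
  forall a : A i, marg Bj p j a = marg Bj p j' a.
Proof.
move=> [_ Hs] jL j'L Hi Hi' H a.
case: (eqVneq a (alpha i)) => [->|]; last exact: H.
have E1 := marg_sum p _ _ Hi; have E2 := marg_sum p _ _ Hi'.
rewrite Hs // in E1; rewrite Hs // in E2.
rewrite (bigD1 (alpha i)) //= in E1; rewrite (bigD1 (alpha i)) //= in E2.
rewrite (eq_bigr _ H) in E1.
by apply: (addIr (\sum_(i0 | i0 != alpha i) marg Bj p j' i0)); rewrite E1 E2.
Qed.

Lemma QB_QA (g : gvar R A) p : QB Bj g p -> QA Bj alpha t g p.
Proof.
move=> [Hp Hg]; split=> //; split.
  by move=> i iY j; rewrite inE => Hij jL a _; exact: Hg.
move=> i iY j; rewrite inE => Hij jt a _.
have jL : j \in Lset Ij.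
  by case: (boolP (j \in Lset Ij)) => // /(Y_of_notL _ _ Hij) iY'; rewrite iY' in iY.
have Hti : i \in Ij (t i) by have := ht i iY; rewrite inE.
have tL : t i \in Lset Ij.
  by case: (boolP (t i \in Lset Ij)) => // /(Y_of_notL _ _ Hti) iY'; rewrite iY' in iY.
by rewrite -(Hg j jL i Hij) -(Hg (t i) tL i Hti).
Qed.

Lemma QA_QB (g : gvar R A) p : QA Bj alpha t g p ->
  QB Bj (gOf p) p /\ forall i, i \in Yset Ij -> forall a, a != alpha i -> gOf p i a = g i a.
Proof.
move=> [Hp [HY HN]].
have key : forall j i, j \in Lset Ij -> i \in Ij j -> forall a, a != alpha i ->
   marg Bj p j a = if i \in Yset Ij then g i a else marg Bj p (t i) a.
  move=> j i jL Hij a Ha; case: ifPn => iY.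
    have jJ : j \in Jset Ij i by rewrite inE.
    by rewrite (HY i iY j jJ jL a Ha).
  have jJ : j \in Jset Ij i by rewrite inE.
  case: (eqVneq j (t i)) => [->//|jt]; exact: (HN i iY j jJ jt a Ha).
split; first split => //.
  move=> j jL i Hij a; rewrite /gOf; apply: (marg_all _ _ _ _ Hp (cjL i) jL (cjI i) Hij) => a' Ha'.
  by rewrite (key _ _ jL Hij a' Ha') (key _ _ (cjL i) (cjI i) a' Ha').
by move=> i iY a Ha; rewrite /gOf (key _ _ (cjL i) (cjI i) a Ha) iY.
Qed.

Lemma QB_gOf (g : gvar R A) p : QB Bj g p -> forall i a, g i a = gOf p i a.
Proof. by move=> [_ Hg] i a; exact: (Hg _ (cjL i) _ (cjI i) a). Qed.

Lemma QB_sum1 (g : gvar R A) p i : QB Bj g p -> \sum_(a : A i) g i a = 1.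
Proof.
move=> HQ; rewrite (eq_bigr _ (fun a _ => QB_gOf _ _ HQ i a)) /gOf marg_sum ?(cjI i) //.
by case: HQ => [[_ Hs] _]; exact: Hs (cjL i).
Qed.

Definition C0 := \sum_(i in Yset Ij) ln (h i (alpha i)).

Lemma objBA (g : gvar R A) p : QB Bj g p -> objB Ij h g = C0 + objA Ij h alpha g.
Proof.
move=> HQ; rewrite /objB /objA /C0 -big_split /=; apply: eq_bigr => i iY.
have Hs := QB_sum1 _ _ i HQ.
rewrite (bigD1 (alpha i)) //= in Hs.
rewrite (bigD1 (alpha i)) //=.
have -> : g i (alpha i) = 1 - \sum_(a | a != alpha i) g i a by rewrite -Hs addrK.
under [in RHS]eq_bigr => a _ do rewrite ln_div ?posrE ?hh // mulrBl.
rewrite sumrB -mulr_sumr; ring.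
Qed.

Lemma objA_eq (g g' : gvar R A) : (forall i, i \in Yset Ij -> forall a, a != alpha i -> g i a = g' i a) ->
  objA Ij h alpha g = objA Ij h alpha g'.
Proof.
move=> H; apply: eq_bigr => i iY; apply: eq_bigr => a Ha; by rewrite H.
Qed.

Lemma natb1 (b : bool) : (b%:R : R) = 1 -> b.
Proof. by case: b => // /eqP; rewrite eq_sym oner_eq0. Qed.

Lemma ind_eq (T : eqType) (x y : T) : (forall a, ((x == a)%:R : R) = (y == a)%:R) -> x = y.
Proof. by move=> H; have := H y; rewrite eqxx => /natb1/eqP. Qed.

Lemma Some_eqE (T : eqType) (x y : T) : (Some x == Some y) = (x == y).
Proof. by []. Qed.

Lemma inB_ext (x y : conf A) : (forall i, x i = y i) -> inB Bj y -> inB Bj x.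
Proof.
move=> H Hy j jL; have -> : restr Ij j x = restr Ij j y.
  by apply/ffunP => k; rewrite !ffunE H.
exact: Hy.
Qed.

Lemma intA_intB (g : gvar R A) p : QB Bj g p -> (intA Bj alpha g p <-> intB Bj g p).
Proof.
move=> HQ; split; last by case=> Hg Hp; split=> // i _ a _; exact: Hg.
case=> _ Hp; split=> // i a; rewrite (QB_gOf _ _ HQ) /gOf /marg.
by apply: rpred_sum => b /andP[Hb _]; exact: Hp _ (cjL i) b Hb.
Qed.

Lemma decode (g : gvar R A) p : QB Bj g p -> p_int Bj p ->
  exists y : conf A, inB Bj y /\ forall i a, g i a = (y i == a)%:R.
Proof.
move=> HQ Hpi.
have Hpo : p_ok Bj p by case: HQ.
have gloc : forall j, j \in Lset Ij -> exists2 b0, b0 \in Bj j &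
    forall i (Hi : i \in Ij j) a, g i a = (b0 (exist _ i Hi) == a)%:R.
  move=> j jL; have [b0 Hb0 Hp0] := p_single _ _ Hpo Hpi jL.
  exists b0 => // i Hi a; case: HQ => _ Hg.
  by rewrite (Hg j jL i Hi a) (marg_single _ _ _ _ _ Hp0 Hb0) (lc_atE _ _ _ Hi) Some_eqE.
pose y : conf A := fun i => odflt (alpha i) [pick a | g i a == 1].
have gy : forall i a, g i a = (y i == a)%:R.
  move=> i; have [b0 Hb0 Hg] := gloc _ (cjL i).
  set c := b0 (exist _ i (cjI i)).
  have Hc : forall a, g i a = (c == a)%:R by move=> a; exact: Hg.
  rewrite /y; case: pickP => [a' /eqP Ha'|Hn].
    have ca : c = a' by apply/eqP/natb1; rewrite -Hc.
    by move=> a /=; rewrite Hc ca.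
  by move=> a; have := Hn c; rewrite /= Hc eqxx /= eqxx.
exists y; split => // j jL.
have [b0 Hb0 Hg] := gloc _ jL.
suff -> : restr Ij j y = b0 by [].
apply/ffunP => -[i Hi]; rewrite ffunE /=.
by apply: ind_eq => a; rewrite -gy (Hg i Hi).
Qed.

Lemma outA_outB (g : gvar R A) p x : QB Bj g p ->
  (outA Bj alpha g p x <-> outB Bj g p x).
Proof.
move=> HQ; split.
  case=> HiA [HxB Hx].
  have HiB : intB Bj g p by apply/(intA_intB _ _ HQ).
  have [y [Hy gy]] := decode _ _ HQ HiB.2.
  have Exy : x = y.
    apply: hinj => // i iY.
    case: (eqVneq (x i) (alpha i)) => [xa|xa].
      case: (eqVneq (y i) (alpha i)) => [ya|ya]; first by rewrite xa ya.
      by apply/eqP/natb1; rewrite -(Hx i iY (y i) ya) gy eqxx.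
    by apply/eqP; rewrite eq_sym; apply/natb1; rewrite -gy (Hx i iY (x i) xa) eqxx.
  by split => // i a; rewrite gy Exy.
case=> HiB Hx; split; first by apply/(intA_intB _ _ HQ).
have [y [Hy gy]] := decode _ _ HQ HiB.2.
split; last by move=> i _ a _; exact: Hx.
apply: (inB_ext x y _ Hy) => i; apply: ind_eq => a; by rewrite -Hx -gy.
Qed.

Lemma opt_conf (g : gvar R A) p x : optB Bj h g p -> outB Bj g p x -> is_opt_conf Bj h x.
Proof.
move=> [HQ Hopt] HxB.
have [_ [HxinB _]] := proj2 (outA_outB _ _ x HQ) HxB.
split => // y Hy.
pose gy : gvar R A := fun i a => (y i == a)%:R.
pose py : pvar R A Ij := fun j b => (b == restr Ij j y)%:R.
have HQy : QB Bj gy py.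
  split; first split.
  - by move=> j _ b _; rewrite /py ler0n.
  - by move=> j jL; rewrite /py sum_eq1 (Hy j jL).
  move=> j jL i Hij a.
  have Hp : forall b, b \in Bj j -> py j b = (b == restr Ij j y)%:R by [].
  rewrite (marg_single _ _ _ _ _ Hp (Hy j jL)) (lc_at_restr _ _ _ Hij) Some_eqE.
  by [].
have := Hopt gy py HQy.
have -> : objB Ij h gy = score Ij h y.
  by apply: eq_bigr => i _; rewrite /gy sum_ind_mul.
have -> : objB Ij h g = score Ij h x.
  by apply: eq_bigr => i _; rewrite (eq_bigr _ (fun a _ => congr1 _ (HxB.2 i a))) sum_ind_mul.
by [].
Qed.

Lemma main_sec :
  (forall (g : gvar R A) (p : pvar R A Ij), optB Bj h g p ->
     optA Bj h alpha t g p /\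
     (intA Bj alpha g p <-> intB Bj g p) /\
     (forall x, outA Bj alpha g p x <-> outB Bj g p x)) /\
  (forall (g : gvar R A) (p : pvar R A Ij), optA Bj h alpha t g p ->
     exists g' : gvar R A,
       (forall i, i \in Yset Ij -> forall a : A i, a != alpha i -> g' i a = g i a) /\
       optB Bj h g' p /\
       (intA Bj alpha g p <-> intB Bj g' p) /\
       (forall x, outA Bj alpha g p x <-> outB Bj g' p x)) /\
  (forall (g : gvar R A) (p : pvar R A Ij), optB Bj h g p ->
     (intB Bj g p -> exists x, outB Bj g p x) /\
     (forall x, outB Bj g p x -> is_opt_conf Bj h x)).
Proof.
split; [|split].
- move=> g p [HQ Hopt]; have HA := QB_QA _ _ HQ.
  split; last split; [split => // g' p' HQ'| exact: intA_intB | move=> x; exact: outA_outB].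
  have [HQB' Hagr] := QA_QB _ _ HQ'.
  have := Hopt _ _ HQB'; rewrite (objBA _ _ HQB') (objBA _ _ HQ) lerD2l => H.
  by rewrite (objA_eq g' (gOf p')) // => i iY a Ha; rewrite Hagr.
- move=> g p [HQA Hopt]; have [HQB Hagr] := QA_QB _ _ HQA.
  exists (gOf p).
  have intE : intA Bj alpha g p <-> intA Bj alpha (gOf p) p.
    by split; case=> H1 H2; split=> // i iY a Ha; [rewrite Hagr | rewrite -Hagr]; auto.
  have outE : forall x, outA Bj alpha g p x <-> outA Bj alpha (gOf p) p x.
    move=> x; split; case=> Hi [HB Hx]; (split; [by apply/intE | split => // i iY a Ha]).
      by rewrite Hagr // Hx.
    by rewrite -Hagr // Hx.
  split => //; split.
    split => // g'' p'' HQ''.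
    rewrite (objBA _ _ HQ'') (objBA _ _ HQB) lerD2l (objA_eq (gOf p) g) //.
    exact: Hopt (QB_QA _ _ HQ'').
  split; first by rewrite intE; exact: intA_intB.
  by move=> x; rewrite outE; exact: outA_outB.
- move=> g p Hopt; split; last by move=> x; exact: opt_conf.
  move=> HiB; have [y [Hy gy]] := decode _ _ Hopt.1 HiB.2.
  by exists y; split.
Qed.

End Pf.

Theorem theorem1 (R : realType) (I J : finType) (A : I -> finType)
  (Ij : J -> {set I}) (Bj : forall j : J, {set lconf A Ij j})
  (h : gvar R A) (alpha : conf A) (t : I -> J)
  (hA : forall i : I, (1 < #|A i|)%N)
  (hh : forall i, i \in Yset Ij -> forall a : A i, 0 < h i a)
  (hinj : forall x y : conf A, inB Bj x -> inB Bj y ->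
            (forall i, i \in Yset Ij -> x i = y i) -> x = y)
  (ht : forall i, i \notin Yset Ij -> t i \in Jset Ij i)
  (hcov : forall i : I, exists j : J, (j \in Jset Ij i) && (j \in Lset Ij)) :
  (forall (g : gvar R A) (p : pvar R A Ij), optB Bj h g p ->
     optA Bj h alpha t g p /\
     (intA Bj alpha g p <-> intB Bj g p) /\
     (forall x, outA Bj alpha g p x <-> outB Bj g p x)) /\
  (forall (g : gvar R A) (p : pvar R A Ij), optA Bj h alpha t g p ->
     exists g' : gvar R A,
       (forall i, i \in Yset Ij -> forall a : A i, a != alpha i -> g' i a = g i a) /\
       optB Bj h g' p /\
       (intA Bj alpha g p <-> intB Bj g' p) /\
       (forall x, outA Bj alpha g p x <-> outB Bj g' p x)) /\
  (forall (g : gvar R A) (p : pvar R A Ij), optB Bj h g p ->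
     (intB Bj g p -> exists x, outB Bj g p x) /\
     (forall x, outB Bj g p x -> is_opt_conf Bj h x)).
Proof. exact: (@main_sec R I J A Ij Bj h alpha t hh hinj ht hcov). Qed.
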